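(* Let $\mathcal{A}$ be a deterministic generalised Büchi automaton with $n$ states and $k$ output colours. Then there is a deterministic generalised Büchi automaton recognising $\mathcal{L}(\mathcal{A})$ which has the minimal number of states among all deterministic generalised Büchi automata recognising $\mathcal{L}(\mathcal{A})$ and which uses $O(n^2k)$ output colours.
   Context: An automaton is a tuple $(Q,\Sigma,q_{\mathrm{init}},\Delta,\Gamma,\mathrm{col},W)$ with finite state set, finite input alphabet, initial state, transitions $\Delta\subseteq Q\times\Sigma\times Q$, output alphabet $\Gamma$, labelling $\mathrm{col}:\Delta\to\Gamma$, acceptance condition $W\subseteq\Gamma^\omega$. A run on $w=a_1a_2\cdots$ is a sequence $(q_0,a_1,q_1)(q_1,a_2,q_2)\cdots$ of transitions with $q_0=q_{\mathrm{init}}$, accepting if its label sequence is in $W$; $\mathcal{L}(\mathcal{A})$ is the set of words with an accepting run. A generalised Büchi automaton with finite output colour set $C$ has $\Gamma=2^C$ and $W=\{x : \text{every } c\in C \text{ occurs in infinitely many letters of } x\}$; its number of output colours is $|C|$. Deterministic: for each $(p,a)$ at most one $q$ with $(p,a,q)\in\Delta$. *)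

(* Defs.v *)
From mathcomp Require Import all_boot.
Unset Printing Implicit Defensive.

(* Generalised Büchi automata over a finite input alphabet [Sigma].
   [gba_col] is the finite set C of output colours; the output alphabet is
   2^C, and [gba_lab] labels each transition with a subset of C. *)
Record gba (Sigma : finType) := Gba {
  gba_state : finType;
  gba_col : finType;
  gba_init : gba_state;
  gba_delta : gba_state -> Sigma -> gba_state -> bool;
  gba_lab : gba_state -> Sigma -> gba_state -> {set gba_col}
}.

Definition word (Sigma : finType) := nat -> Sigma.

Definition is_run {Sigma : finType} (A : gba Sigma) (w : word Sigma)
  (r : nat -> @gba_state _ A) : Prop :=
  r 0 = @gba_init _ A /\ forall i, @gba_delta _ A (r i) (w i) (r i.+1).

Definition gb_accepting {Sigma : finType} (A : gba Sigma) (w : word Sigma)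
  (r : nat -> @gba_state _ A) : Prop :=
  forall c : @gba_col _ A, forall N, exists i, N <= i /\ c \in @gba_lab _ A (r i) (w i) (r i.+1).

Definition accepts {Sigma : finType} (A : gba Sigma) (w : word Sigma) : Prop :=
  exists r, is_run A w r /\ gb_accepting A w r.

Definition same_lang {Sigma : finType} (A B : gba Sigma) : Prop :=
  forall w, accepts A w <-> accepts B w.

Definition deterministic {Sigma : finType} (A : gba Sigma) : Prop :=
  forall p a q q', @gba_delta _ A p a q -> @gba_delta _ A p a q' -> q = q'.

Definition nstates {Sigma : finType} (A : gba Sigma) : nat := #|@gba_state _ A|.
Definition ncolours {Sigma : finType} (A : gba Sigma) : nat := #|@gba_col _ A|.

(* Main.v *)
Require Import Defs.
From mathcomp Require Import all_boot.
From Stdlib Require Import ClassicalEpsilon Classical.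
Set Implicit Arguments. Unset Strict Implicit.

Section Gen.
Variable S : finType.
Variable X : gba S.
Notation Q := (gba_state S X).
Notation dl := (gba_delta S X).
Notation lb := (gba_lab S X).

Definition nxt (q : Q) (a : S) : option Q := [pick q' | dl q a q'].
Fixpoint mrun (q : Q) (s : seq S) : option Q :=
  match s with [::] => Some q | a :: s' =>
    match nxt q a with Some q' => mrun q' s' | None => None end end.
Fixpoint lbls (q : Q) (s : seq S) : seq {set gba_col S X} :=
  match s with [::] => [::] | a :: s' =>
    match nxt q a with Some q' => lb q a q' :: lbls q' s' | None => [::] end end.
Definition runfrom (q : Q) (w : nat -> S) (r : nat -> Q) :=
  r 0 = q /\ forall i, dl (r i) (w i) (r i.+1).

Hypothesis det : deterministic X.

Lemma nxtP q a q' : dl q a q' -> nxt q a = Some q'.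
Proof. move=> H; rewrite /nxt; case: pickP => [q'' H'|/(_ q') ]; last by rewrite H.
by rewrite (det H' H). Qed.
Lemma nxt_dl q a q' : nxt q a = Some q' -> dl q a q'.
Proof. by rewrite /nxt; case: pickP => // q'' H [<-]. Qed.

Lemma mrun_cat q s t : mrun q (s ++ t) = obind (fun q' => mrun q' t) (mrun q s).
Proof. by elim: s q => //= a s IH q; case: (nxt q a). Qed.
Lemma lbls_cat q s t : lbls q (s ++ t) =
  lbls q s ++ (if mrun q s is Some q' then lbls q' t else [::]).
Proof. elim: s q => //= a s IH q; case: (nxt q a) => //= q'; by rewrite IH. Qed.
Lemma mrun_rcons q s a : mrun q (rcons s a) = obind (fun q' => nxt q' a) (mrun q s).
Proof. rewrite -cats1 mrun_cat; case: (mrun q s) => //= q'; by case: (nxt q' a). Qed.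
Lemma mrun_prefix q s t : mrun q (s ++ t) != None -> mrun q s != None.
Proof. by rewrite mrun_cat; case: (mrun q s). Qed.

Lemma acc_shift (w1 w2 : nat -> S) r1 r2 m :
  (forall j, w2 (j + m) = w1 j /\ r2 (j + m) = r1 j) ->
  gb_accepting X w1 r1 <-> gb_accepting X w2 r2.
Proof.
move=> E; split=> H c N.
- have [i [Hi Hc]] := H c N; exists (i + m); split.
    by apply: (leq_trans Hi); apply: leq_addr.
  have [E1 E2] := E i; have [_ E3] := E i.+1.
  rewrite E1 E2 -addSn E3; exact: Hc.
- have [i [Hi Hc]] := H c (N + m).
  have Hm : m <= i by apply: leq_trans (leq_addl N m) Hi.
  exists (i - m); split.
    by rewrite leq_subRL // addnC.
  have [E1 E2] := E (i - m); have [_ E3] := E (i - m).+1.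
  rewrite subnK in E1 E2 => //.
  rewrite addSn subnK in E3 => //.
  by rewrite -E1 -E2 -E3.
Qed.

Fixpoint seg (w : nat -> S) j k : seq S :=
  match k with 0 => [::] | k'.+1 => w j :: seg w j.+1 k' end.

Lemma seg_add w j k1 k2 : seg w j (k1 + k2) = seg w j k1 ++ seg w (j + k1) k2.
Proof. elim: k1 j => [|k1 IH] j /=; first by rewrite addn0. by rewrite IH addSnnS. Qed.
Lemma seg_rcons w j k : seg w j k.+1 = rcons (seg w j k) (w (j + k)).
Proof. by rewrite -addn1 seg_add cats1. Qed.
Lemma size_seg w j k : size (seg w j k) = k.
Proof. by elim: k j => //= k IH j; rewrite IH. Qed.

Lemma run_seg w r : (forall i, dl (r i) (w i) (r i.+1)) ->
  forall j k, mrun (r j) (seg w j k) = Some (r (j + k)).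
Proof. move=> H j k; elim: k j => [|k IH] j /=; first by rewrite addn0.
by rewrite (nxtP (H j)) IH addSnnS. Qed.

Lemma run_of_mrun q w : (forall i, mrun q (seg w 0 i) != None) ->
  exists r, runfrom q w r /\ forall i, mrun q (seg w 0 i) = Some (r i).
Proof.
move=> H; exists (fun i => odflt q (mrun q (seg w 0 i))).
have E : forall i, mrun q (seg w 0 i) = Some (odflt q (mrun q (seg w 0 i))).
  by move=> i; move: (H i); case: (mrun q _).
split=> //; split=> // i.
have := E i.+1; rewrite seg_rcons mrun_rcons E /= => /nxt_dl. done.
Qed.

Lemma lbls_in a0 q k s q1 q2 : k < size s -> mrun q (take k s) = Some q1 ->
  nxt q1 (nth a0 s k) = Some q2 -> lb q1 (nth a0 s k) q2 \in lbls q s.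
Proof.
move=> Hk H1 H2; have -> : lbls q s = lbls q (take k s ++ drop k s) by rewrite cat_take_drop.
rewrite lbls_cat H1 mem_cat; apply/orP; right.
rewrite (drop_nth a0 Hk) /= H2 mem_head. done.
Qed.

Lemma lbls_has a0 q s (P : pred {set gba_col S X}) : has P (lbls q s) ->
  exists k q1 q2, [/\ k < size s, mrun q (take k s) = Some q1,
    nxt q1 (nth a0 s k) = Some q2 & P (lb q1 (nth a0 s k) q2)].
Proof.
elim: s q => //= a s IH q; case E: (nxt q a) => [q'|//] /= /orP [HP|].
- by exists 0, q, q'.
- move=> /IH [k [q1 [q2 [H1 H2 H3 H4]]]]; exists k.+1, q1, q2; split=> //=.
  by rewrite E.
Qed.

Lemma lbls_avoid w r (c : gba_col S X) j k : (forall i, dl (r i) (w i) (r i.+1)) ->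
  (forall t, j <= t -> t < j + k -> c \notin lb (r t) (w t) (r t.+1)) ->
  all (fun T : {set gba_col S X} => c \notin T) (lbls (r j) (seg w j k)).
Proof.
move=> H; elim: k j => [|k IH] j //= Hc.
rewrite (nxtP (H j)) /= Hc ?leqnn ?addnS ?ltnS ?leq_addr //=.
apply: IH => t Ht1 Ht2; apply: Hc; [apply: ltnW | rewrite addnS -addSn]; done.
Qed.

Definition omega (a0 : S) (cyc : seq S) (i : nat) := nth a0 cyc (i %% size cyc).

Lemma modS1 i n : 0 < n -> i.+1 %% n = if (i %% n).+1 == n then 0 else (i %% n).+1.
Proof.
move=> Hn; rewrite -addn1 -modnDml addn1; case: eqP => [->|Hne]; first by rewrite modnn.
rewrite modn_small //; have := ltn_pmod i Hn; rewrite leq_eqVlt => /orP [/eqP//|//].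
Qed.

Lemma omega_mrun a0 q cyc : mrun q cyc = Some q -> 0 < size cyc ->
  forall i, mrun q (seg (omega a0 cyc) 0 i) = mrun q (take (i %% size cyc) cyc).
Proof.
move=> Hc Hn; elim=> [|i IH]; first by rewrite mod0n take0.
rewrite seg_rcons mrun_rcons IH add0n /omega -mrun_rcons -take_nth ?ltn_pmod //.
rewrite modS1 //; case: eqP => [->|]; last by [].
by rewrite take_size take0 Hc.
Qed.

Lemma omega_run a0 q cyc : mrun q cyc = Some q -> 0 < size cyc ->
  exists r, runfrom q (omega a0 cyc) r /\
   (forall i, mrun q (take (i %% size cyc) cyc) = Some (r i)) /\
   (forall i, lb (r i) (omega a0 cyc i) (r i.+1) \in lbls q cyc) /\
   (forall P : pred {set gba_col S X}, has P (lbls q cyc) -> forall N, exists i, N <= i /\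
        P (lb (r i) (omega a0 cyc i) (r i.+1))).
Proof.
move=> Hc Hn.
have Hs : forall i, mrun q (seg (omega a0 cyc) 0 i) != None.
  move=> i; rewrite omega_mrun //; apply: (@mrun_prefix _ _ (drop (i %% size cyc) cyc)).
  by rewrite cat_take_drop Hc.
have [r [[Hr0 Hr] Hm]] := run_of_mrun Hs.
have Hm' : forall i, mrun q (take (i %% size cyc) cyc) = Some (r i).
  by move=> i; rewrite -(omega_mrun a0).

exists r; split; first by []. split; first by []. split.
- move=> i; apply: lbls_in; first by apply: ltn_pmod.
    exact: Hm'.
  exact: nxtP (Hr i).
- move=> P /(lbls_has a0) [k [q1 [q2 [Hk H1 H2 HP]]]] N.
  exists (N * size cyc + k); split.
    by apply: leq_trans (leq_pmulr _ Hn) (leq_addr _ _).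
  have Ek : (N * size cyc + k) %% size cyc = k by rewrite modnMDl modn_small.
  have Er : r (N * size cyc + k) = q1.
    by have := Hm' (N * size cyc + k); rewrite Ek H1 => -[].
  have := nxtP (Hr (N * size cyc + k)); rewrite /omega Ek Er H2 => -[<-]. exact: HP.
Qed.

Definition wcat (u : seq S) (w : nat -> S) (i : nat) :=
  if i < size u then nth (w 0) u i else w (i - size u).

Lemma seg_wcat u w j : seg (wcat u w) 0 (size u + j) = u ++ seg w 0 j.
Proof.
rewrite seg_add add0n; congr (_ ++ _).
- have : forall t, t <= size u -> seg (wcat u w) 0 t = take t u.
    elim=> [|t IH] Ht; first by rewrite take0.
    rewrite seg_rcons IH ?(ltnW Ht) // (take_nth (w 0) Ht) /wcat add0n Ht. done.
  by move=> ->; rewrite ?take_size.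
- suff H : forall t, seg (wcat u w) (size u + t) j = seg w t j by rewrite -(H 0) addn0.
  elim: j => [|j IH] t //=; rewrite -addnS IH /wcat ltnNge leq_addr /= addKn. done.
Qed.

Lemma seg_wcat_take u w t : t <= size u -> seg (wcat u w) 0 t = take t u.
Proof.
elim: t => [|t IH] Ht; first by rewrite take0.
rewrite seg_rcons IH ?(ltnW Ht) // (take_nth (w 0) Ht) /wcat add0n Ht. done.
Qed.

Lemma wcat_acc q0 u q w r : mrun q0 u = Some q -> runfrom q w r -> gb_accepting X w r ->
  exists rc, runfrom q0 (wcat u w) rc /\ gb_accepting X (wcat u w) rc.
Proof.
move=> Hu [Hr0 Hr] Ha.
have Hs2 : forall j, mrun q0 (seg (wcat u w) 0 (size u + j)) = Some (r j).
  by move=> j; rewrite seg_wcat mrun_cat Hu /= -Hr0 run_seg.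
have Hn : forall i, mrun q0 (seg (wcat u w) 0 i) != None.
  move=> i; case: (leqP i (size u)) => Hi.
  - rewrite seg_wcat_take //; apply: (@mrun_prefix _ _ (drop i u)).
    by rewrite cat_take_drop Hu.
  - by rewrite -(subnKC (ltnW Hi)) Hs2.
have [rc [Hrc Hm]] := run_of_mrun Hn.
exists rc; split; first by [].
have E : forall j, wcat u w (j + size u) = w j /\ rc (j + size u) = r j.
  move=> j; split.
  - by rewrite /wcat ltnNge leq_addl /= addnK.
  - by have := Hm (j + size u); rewrite addnC Hs2 => -[].
exact: (proj1 (acc_shift E) Ha).
Qed.

End Gen.

Definition dec (P : Prop) : bool := if excluded_middle_informative P then true else false.
Lemma decP P : dec P <-> P.
Proof. by rewrite /dec; case: excluded_middle_informative. Qed.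

Lemma pigeon (T : finType) (f : nat -> T) : exists z, forall M, exists j, M <= j /\ f j = z.
Proof.
apply: NNPP => H.
have H' : forall z, exists M, forall j, M <= j -> f j <> z.
  move=> z; apply: NNPP => Hz; apply: H; exists z => M; apply: NNPP => HM; apply: Hz.
  exists M => j Hj Hf; apply: HM; by exists j.
have : forall s : seq T, exists M, forall z, z \in s -> forall j, M <= j -> f j <> z.
  elim=> [|a s [M2 IH]]; first by exists 0.
  have [M1 H1] := H' a; exists (maxn M1 M2) => z; rewrite inE => /orP [/eqP ->|Hz] j Hj.
  - by apply: H1; apply: leq_trans Hj; rewrite leq_maxl.
  - by apply: IH => //; apply: leq_trans Hj; rewrite leq_maxr.
move=> /(_ (enum T)) [M HM]; exact: (HM (f M) (mem_enum _ _) M (leqnn _)).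
Qed.

Lemma exists_min (Sigma : finType) (A : gba Sigma) : deterministic A -> exists B0 : gba Sigma,
  [/\ deterministic B0, same_lang B0 A &
    forall B', deterministic B' -> same_lang B' A -> nstates B0 <= nstates B'].
Proof.
move=> dA.
suff H : forall m (B1 : gba Sigma), nstates B1 <= m -> deterministic B1 -> same_lang B1 A ->
  exists B0 : gba Sigma, [/\ deterministic B0, same_lang B0 A &
    forall B', deterministic B' -> same_lang B' A -> nstates B0 <= nstates B'].
  by apply: (H (nstates A) A) => // w.
elim=> [|m IH] B1 Hm Hd Hs.
- exists B1; split => // B' _ _; rewrite leqn0 in Hm; by rewrite (eqP Hm).
- case: (classic (forall B', deterministic B' -> same_lang B' A -> nstates B1 <= nstates B')) => H.
    by exists B1.
  have [B2 HB2] := not_all_ex_not _ _ H.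
  have d2 : deterministic B2 by apply: NNPP => C; apply: HB2 => d; case: (C d).
  have s2 : same_lang B2 A by apply: NNPP => C; apply: HB2 => _ d; case: (C d).
  have n2 : ~ nstates B1 <= nstates B2 by move=> n; apply: HB2.
  apply: (IH B2) => //.
  move/negP: n2; rewrite -ltnNge => n2; rewrite -ltnS; exact: leq_trans n2 Hm.
Qed.

Section Constr.
Variable Sigma : finType.
Variables A B0 : gba Sigma.
Hypothesis dA : deterministic A.
Hypothesis dB : deterministic B0.
Hypothesis sl : same_lang B0 A.

Notation P := (gba_state Sigma B0).
Notation Q := (gba_state Sigma A).
Notation C := (gba_col Sigma A).
Notation D := (gba_col Sigma B0).

Definition live (q : P) := exists w r, runfrom q w r /\ gb_accepting B0 w r.

Definition Rprop (y : C * P * Q) (q : P) (a : Sigma) :=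
  exists u0 u v, [/\ mrun (gba_init Sigma B0) u0 = Some y.1.2, mrun (gba_init Sigma A) u0 = Some y.2,
     mrun y.1.2 u = Some q, mrun y.1.2 (u ++ a :: v) = Some y.1.2 &
     mrun y.2 (u ++ a :: v) = Some y.2 /\
     all (fun T : {set C} => y.1.1 \notin T) (lbls y.2 (u ++ a :: v))].

Definition Bm : gba Sigma := @Gba Sigma P (C * P * Q)%type (gba_init Sigma B0)
  (fun q a q' => gba_delta Sigma B0 q a q' && dec (live q'))
  (fun q a q' => [set y | ~~ dec (Rprop y q a)]).

Lemma Bm_det : deterministic Bm.
Proof. move=> p a q q' /andP [H1 _] /andP [H2 _]; exact: dB H1 H2. Qed.


Lemma dirB w : accepts Bm w -> accepts A w.
Proof.
move=> [r [[r0 Hr] Ha]].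
have HrB : forall i, gba_delta Sigma B0 (r i) (w i) (r i.+1) by move=> i; case/andP: (Hr i).
have Hlive : forall i, live (r i.+1) by move=> i; case/andP: (Hr i) => _ /decP.
apply NNPP; intro HnA.
case: (classic (forall i, mrun (gba_init Sigma A) (seg w 0 i) != None)) => [Hall|Hex].
- have [rho [[rho0 Hrho] Hm]] := run_of_mrun Hall.
  have Hna : ~ gb_accepting A w rho by move=> H; apply: HnA; exists rho.
  have [c Hc] := not_all_ex_not _ _ Hna.
  have [N HN] := not_all_ex_not _ _ Hc.
  have HN' : forall i, N <= i -> c \notin gba_lab Sigma A (rho i) (w i) (rho i.+1).
    move=> i Hi; apply/negP => Hin; apply: HN; by exists i.
  have [[p x] Hpx] := pigeon (fun i => (r i, rho i)).
  have [j0 [Hj0 E0]] := Hpx N.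
  case: E0 => Ep0 Ex0.
  have HR : forall i, j0 <= i -> Rprop (c, p, x) (r i) (w i).
    move=> i Hi.
    have [j1 [Hj1 E1]] := Hpx i.+1; case: E1 => Ep1 Ex1.
    exists (seg w 0 j0), (seg w j0 (i - j0)), (seg w i.+1 (j1 - i.+1)); split => /=.
    + by rewrite -r0 (run_seg dB HrB) add0n Ep0.
    + by rewrite -rho0 (run_seg dA Hrho) add0n Ex0.
    + by rewrite -Ep0 (run_seg dB HrB) subnKC.
    + rewrite mrun_cat -Ep0 (run_seg dB HrB) subnKC //= (nxtP dB (HrB i)) (run_seg dB HrB) subnKC //.
      by rewrite Ep1 Ep0.
    + split.
      * rewrite mrun_cat -Ex0 (run_seg dA Hrho) subnKC //= (nxtP dA (Hrho i)) (run_seg dA Hrho) subnKC //.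
        by rewrite Ex1 Ex0.
      * rewrite lbls_cat -Ex0 (run_seg dA Hrho) subnKC // all_cat; apply/andP; split.
          apply: (lbls_avoid dA) => // t Ht _; apply: HN'; exact: leq_trans Hj0 Ht.
        rewrite /= (nxtP dA (Hrho i)) /= HN' ?(leq_trans Hj0 Hi) //=.
        apply: (lbls_avoid dA) => // t Ht _; apply: HN'; apply: leq_trans Ht.
        by apply: leq_trans (leq_trans Hj0 Hi) _.
  have [i [Hi Hin]] := Ha (c, p, x) j0.
  by move: Hin; rewrite inE => /negP; apply; apply/decP; apply: HR.
- have [i Hi] := not_all_ex_not _ _ Hex.
  have Hi' : mrun (gba_init Sigma A) (seg w 0 i) = None.
    by move: Hi; case: (mrun _ _).
  case: i Hi Hi' => [|k] _ Hi; first by [].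
  have [w2 [r2 [Hr2 Ha2]]] := Hlive k.
  have Hu : mrun (gba_init Sigma B0) (seg w 0 k.+1) = Some (r k.+1) by rewrite -r0 (run_seg dB HrB).
  have [rc [Hrc Hac]] := wcat_acc dB Hu Hr2 Ha2.
  have [rho [[rho0 Hrho] _]] : accepts A (wcat (seg w 0 k.+1) w2) by apply/sl; exists rc.
  have := run_seg dA Hrho 0 (size (seg w 0 k.+1) + 0).
  by rewrite rho0 seg_wcat cats0 Hi.
Qed.


Lemma dirA w : accepts A w -> accepts Bm w.
Proof.
move=> /(proj2 (sl w)) [r [[r0 Hr] Ha]].
have Hlive : forall i, live (r i).
  move=> i; exists (fun j => w (j + i)), (fun j => r (j + i)); split.
    by split => // j; rewrite addSn; apply: Hr.
  have E : forall j, w (j + i) = w (j + i) /\ r (j + i) = r (j + i) by [].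
  exact: (proj2 (acc_shift E) Ha).
exists r; split.
- split => // i; rewrite /= Hr /=; apply/decP; exact: Hlive.
- move=> y N; apply NNPP; intro Hno.
  have HR : forall i, N <= i -> Rprop y (r i) (w i).
    move=> i Hi; apply NNPP; intro Hn; apply: Hno; exists i; split => //.
    rewrite /= inE; apply/negP => /decP; exact: Hn.
  case: y HR Hno => [[c p] x] HR _.
  have [u0 [u [v [Hu0B Hu0A _ _ [_ _]]]]] := HR N (leqnn N).
  have Hcyc : forall i, N <= i -> exists cyc, [/\ 0 < size cyc, mrun p cyc = Some p,
      mrun x cyc = Some x, all (fun T : {set C} => c \notin T) (lbls x cyc) &
      (forall d, d \in gba_lab Sigma B0 (r i) (w i) (r i.+1) ->
          has (fun T : {set D} => d \in T) (lbls p cyc))].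
    move=> i Hi; have [u0' [u1 [v1 [_ _ Hq HpB [HxA Hav]]]]] := HR i Hi.
    exists (u1 ++ w i :: v1); split => //.
    + by rewrite size_cat /= addnS.
    + move=> d Hd; rewrite lbls_cat Hq /= (nxtP dB (Hr i)) /= has_cat; apply/orP; right.
      by rewrite /= Hd.
  have Hall : forall s : seq D, exists cyc, [/\ 0 < size cyc, mrun p cyc = Some p,
      mrun x cyc = Some x, all (fun T : {set C} => c \notin T) (lbls x cyc) &
      (forall d, d \in s -> has (fun T : {set D} => d \in T) (lbls p cyc))].
    elim=> [|d s [cyc [H1 H2 H3 H4 H5]]].
    + have [cyc [H1 H2 H3 H4 _]] := Hcyc N (leqnn N); by exists cyc.
    + have [i [Hi Hd]] := Ha d N.
      have [cyc2 [G1 G2 G3 G4 G5]] := Hcyc i Hi.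
      exists (cyc ++ cyc2); split.
      * by rewrite size_cat ltn_addr.
      * by rewrite mrun_cat H2.
      * by rewrite mrun_cat H3.
      * by rewrite lbls_cat H3 all_cat H4.
      * move=> d'; rewrite inE lbls_cat H2 has_cat => /orP [/eqP ->|Hd']; apply/orP.
          by right; apply: G5.
        by left; apply: H5.
  have [cyc [H1 H2 H3 H4 H5]] := Hall (enum D).
  have [rB [HrB [_ [_ HhB]]]] := omega_run dB (w 0) H2 H1.
  have HaB : gb_accepting B0 (omega (w 0) cyc) rB.
    move=> d N'; exact: (HhB (fun T => d \in T) (H5 d (mem_enum _ _)) N').
  have [rc [Hrc Hac]] := wcat_acc dB Hu0B HrB HaB.
  have [rho [[rho0 Hrho] Harho]] : accepts A (wcat u0 (omega (w 0) cyc)).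
    by apply/(sl _); exists rc.
  have [rA [[rA0 HrA] [_ [HlA _]]]] := omega_run dA (w 0) H3 H1.
  have E : forall j, wcat u0 (omega (w 0) cyc) (j + size u0) = omega (w 0) cyc j /\
      rho (j + size u0) = rA j.
    move=> j; split; first by rewrite /wcat ltnNge leq_addl /= addnK.
    have := run_seg dA Hrho 0 (size u0 + j).
    rewrite rho0 seg_wcat mrun_cat Hu0A /= -rA0 (run_seg dA HrA) !add0n addnC => -[]. done.
  have [i [_ Hci]] := (proj2 (acc_shift E) Harho) c 0.
  have := HlA i; move: H4 => /allP H4 /H4. by rewrite Hci.
Qed.

End Constr.

Theorem lemma31 :
  exists c : nat,
    forall (Sigma : finType) (A : gba Sigma),
      deterministic A ->
      exists B : gba Sigma,
        [/\ deterministic B,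
            same_lang B A,
            (forall B' : gba Sigma, deterministic B' -> same_lang B' A ->
                nstates B <= nstates B')
          & ncolours B <= c * (nstates A) ^ 2 * ncolours A].
Proof.
exists 1 => Sigma A dA.
have [B0 [dB sl mn]] := exists_min dA.
exists (Bm A B0); split.
- exact: Bm_det dB.
- by move=> w; split; [apply: dirB | apply: dirA].
- move=> B' d' s'; exact: mn.
- have HP : nstates B0 <= nstates A by apply: mn => // w.
  rewrite /ncolours /= !card_prod mul1n [X in _ <= X]mulnC -mulnA.
  apply: leq_mul => //; rewrite expnS expn1; exact: leq_mul HP (leqnn _).
Qed.
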